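(* Let $v:\mathcal Q\to\mathbb R$ be the valuation induced by an assignment message, and let $\mathbf p\in\mathbb R^n$. Consider the linear program (MCF) in variables $y_I$, $I\in\mathcal I$: minimize $\sum_{i=1}^n\sum_{j\in R_i}(p_i-v_j)\,y_{\{j\}}$ subject to $y_I-\sum_{K\in s_0(I)}y_K=0$ for all non-singleton $I\in\mathcal T_0$; $\sum_{K\in s_i(I)}y_K-y_I=0$ for all non-singleton $I\in\mathcal T_i$, $i=1,\dots,n$; $\sum_{i=1}^n y_{R_i}-y_{R_0}=0$; $\ell(I)\le y_I\le u(I)$ for all $I\in\mathcal I$. Then $\mathbf q\in D(\mathbf p)$ if and only if there is an integral optimal solution $\mathbf y$ of (MCF) with $q_i=y_{R_i}$ for all $i=1,\dots,n$.
   Context: There are $n\ge2$ goods; $D(\mathbf p)=\arg\max_{\mathbf q\in\mathcal Q}v(\mathbf q)-\langle\mathbf p,\mathbf q\rangle$. A family $\mathcal T$ of subsets of a finite set $J$ is a tree if it is nonempty and any two members with nonempty intersection are nested. For $K\in\mathcal T$, its predecessor is the inclusion-minimal $L\in\mathcal T$ with $L\supsetneq K$ (if it exists), and $s_{\mathcal T}(L)$ is the set of $K\in\mathcal T$ whose predecessor is $L$. An assignment message consists of variables $J=\{1,\dots,m\}$, each $j$ associated with a good $k_j\in\{1,\dots,n\}$ and value $v_j\in\mathbb R$, with $R_i=\{j:k_j=i\}$ nonempty for all $i\ge1$ and $R_0:=J$; and a family $\mathcal I=\mathcal T_0\cup\dots\cup\mathcal T_n$ of subsets of $J$ with integral bounds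 $\ell(I)\le 0\le u(I)$, where each $\mathcal T_i$ is a tree, for $i\ge1$ $\mathcal T_i\subseteq\mathcal P(R_i)$ contains $R_i$ and all $\{j\}$, $j\in R_i$, and $\mathcal T_0$ contains $J$ and all $\{j\}$, $j\in J$. We write $s_i(L):=s_{\mathcal T_i}(L)$. It is assumed (without loss of generality) that the trees intersect only in terminal nodes: $\mathcal T_0\cap\mathcal T_i=\{\{j\}:j\in R_i\}$ and $\mathcal T_i\cap\mathcal T_k=\emptyset$ for distinct $i,k\ge1$. The induced valuation is $v(\mathbf q)=\max\{\sum_jv_jx_j:\mathbf x\in\mathbb Z^m,\ \ell(I)\le\sum_{j\in I}x_j\le u(I)\ \forall I\in\mathcal I,\ \sum_{j\in R_i}x_j=q_i\ \forall i\}$ on the set $\mathcal Q$ of $\mathbf q\in\mathbb Z^n$ for which this is feasible. *)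

(* Defs.v *)
From HB Require Import structures.
From mathcomp Require Import all_boot all_order all_algebra.
From mathcomp Require Import reals.
Set Implicit Arguments. Unset Strict Implicit. Unset Printing Implicit Defensive.
Import Order.TTheory GRing.Theory Num.Theory.
Local Open Scope ring_scope.

(* Goods are indexed by 'I_n (good i of the paper, 1<=i<=n, is i-1 here).
   Variables J = {1..m} are indexed by 'I_m. *)

Definition is_tree (m : nat) (T : {set {set 'I_m}}) : Prop :=
  T != set0 /\
  forall A B, A \in T -> B \in T -> A :&: B != set0 ->
    (A \subset B) || (B \subset A).

Definition is_pred (m : nat) (T : {set {set 'I_m}}) (K L : {set 'I_m}) : bool :=
  [&& L \in T, K \proper L &
      [forall L' in T, (K \proper L') ==> (L \subset L')]].

Definition succs (m : nat) (T : {set {set 'I_m}}) (L : {set 'I_m}) : {set {set 'I_m}} :=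
  [set K in T | is_pred T K L].

Definition Rset (n m : nat) (k : 'I_m -> 'I_n) (i : 'I_n) : {set 'I_m} :=
  [set j | k j == i].

Definition Ifam (n m : nat) (T0 : {set {set 'I_m}}) (T : 'I_n -> {set {set 'I_m}})
  : {set {set 'I_m}} := T0 :|: \bigcup_(i < n) T i.

Definition assignment_message (n m : nat) (k : 'I_m -> 'I_n)
  (T0 : {set {set 'I_m}}) (T : 'I_n -> {set {set 'I_m}})
  (l u : {set 'I_m} -> int) : Prop :=
  [/\ (forall i, Rset k i != set0),
      (is_tree T0 /\ (forall i, is_tree (T i))),
      (forall i, [/\ (forall I, I \in T i -> I \subset Rset k i),
                     Rset k i \in T i &
                     (forall j, j \in Rset k i -> [set j] \in T i)]),
      ([set: 'I_m] \in T0 /\ (forall j, [set j] \in T0)) &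
      [/\ (forall i, T0 :&: T i = [set [set j] | j in Rset k i]),
          (forall i i', i != i' -> T i :&: T i' = set0) &
          (forall I, I \in Ifam T0 T -> (l I <= 0)%R /\ (0 <= u I)%R)]].

Section Valuation.
Variables (R : realType) (n m : nat) (k : 'I_m -> 'I_n) (vv : 'I_m -> R)
  (T0 : {set {set 'I_m}}) (T : 'I_n -> {set {set 'I_m}})
  (l u : {set 'I_m} -> int).

(* x in Z^m is feasible for q in the program defining v(q). *)
Definition x_feasible (q : 'I_n -> int) (x : 'I_m -> int) : Prop :=
  (forall I, I \in Ifam T0 T ->
     (l I <= \sum_(j in I) x j)%R /\ (\sum_(j in I) x j <= u I)%R) /\
  (forall i, \sum_(j in Rset k i) x j = q i).

Definition x_value (x : 'I_m -> int) : R := \sum_(j < m) vv j * (x j)%:~R.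

Definition in_Q (q : 'I_n -> int) : Prop := exists x, x_feasible q x.

(* w = v(q), i.e. w is the maximum of the program defining v(q). *)
Definition is_val (q : 'I_n -> int) (w : R) : Prop :=
  (exists x, x_feasible q x /\ x_value x = w) /\
  (forall x, x_feasible q x -> x_value x <= w).

Definition pairing (p : 'I_n -> R) (q : 'I_n -> int) : R :=
  \sum_(i < n) p i * (q i)%:~R.

Definition demand (p : 'I_n -> R) (q : 'I_n -> int) : Prop :=
  in_Q q /\
  exists w, is_val q w /\
    forall q' w', in_Q q' -> is_val q' w' -> w' - pairing p q' <= w - pairing p q.

Definition mcf_feasible (y : {set 'I_m} -> R) : Prop :=
  [/\ (forall I, I \in T0 -> #|I| != 1%N ->
         y I - \sum_(K in succs T0 I) y K = 0),
      (forall i I, I \in T i -> #|I| != 1%N ->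
         \sum_(K in succs (T i) I) y K - y I = 0),
      \sum_(i < n) y (Rset k i) - y [set: 'I_m] = 0 &
      (forall I, I \in Ifam T0 T -> (l I)%:~R <= y I /\ y I <= (u I)%:~R)].

Definition mcf_obj (p : 'I_n -> R) (y : {set 'I_m} -> R) : R :=
  \sum_(i < n) \sum_(j in Rset k i) (p i - vv j) * y [set j].

Definition mcf_optimal (p : 'I_n -> R) (y : {set 'I_m} -> R) : Prop :=
  mcf_feasible y /\ forall y', mcf_feasible y' -> mcf_obj p y <= mcf_obj p y'.

Definition integral_sol (y : {set 'I_m} -> R) : Prop :=
  forall I, I \in Ifam T0 T -> exists z : int, y I = z%:~R.

End Valuation.

(* Main.v *)
Require Import Defs.
From HB Require Import structures.
From mathcomp Require Import all_boot all_order all_algebra.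
From mathcomp Require Import reals.
From mathcomp Require Import zify lra.
From Stdlib Require Import Lia FunctionalExtensionality.
Set Implicit Arguments. Unset Strict Implicit. Unset Printing Implicit Defensive.
Import Order.TTheory GRing.Theory Num.Theory.
Local Open Scope ring_scope.

Fixpoint Allf (T : Type) (P : T -> Prop) (s : seq T) : Prop :=
  if s is x :: s' then P x /\ Allf P s' else True.

Lemma Allf_map (T U : Type) (P : U -> Prop) (g : T -> U) s :
  Allf P (map g s) -> Allf (fun x => P (g x)) s.
Proof. by elim: s => //= x s IH [? /IH]. Qed.

Lemma Allf_impl (T : Type) (P P' : T -> Prop) s :
  (forall x, P x -> P' x) -> Allf P s -> Allf P' s.
Proof. by move=> H; elim: s => //= x s IH [/H ? /IH]. Qed.

Section Kernel.
Variables (F : fieldType) (E : finType).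

Lemma kernel_exists (fs : seq (E -> F)) (S : {set E}) :
  (size fs < #|S|)%N ->
  exists d : E -> F, [/\ (forall e, e \notin S -> d e = 0),
     (exists e, d e != 0) &
     Allf (fun f => \sum_e f e * d e = 0) fs].
Proof.
move Hn : (size fs) => n; elim: n fs S Hn => [|n IH] [|f fs] S //= Hn.
  move=> /card_gt0P [e0 He0].
  exists (fun e => (e == e0)%:R); split => //.
  - by move=> e He; case: eqP He => // ->; rewrite He0.
  - by exists e0; rewrite eqxx oner_neq0.
case: Hn => Hn.
case: (pickP [pred e | (e \in S) && (f e != 0)]) => [e1 /andP [He1 Hf1]|Hnone] Hsz.
- pose fs' := map (fun g => fun e => g e - g e1 / f e1 * f e) fs.
  have Hsz' : (n < #|S :\ e1|)%N.
    by move: Hsz; rewrite (cardsD1 e1 S) He1 /= add1n ltnS ?Hn.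
  have [d' [Hsup Hnz Hk]] := IH fs' _ (etrans (size_map _ _) Hn) Hsz'.
  have d'e1 : d' e1 = 0 by apply: Hsup; rewrite setD11.
  set a := \sum_e f e * d' e.
  exists (fun e => d' e - a / f e1 * (e == e1)%:R); split.
  + move=> e He; case: (eqVneq e e1) => [Ee | ne]; first by rewrite Ee He1 in He.
    by rewrite mulr0 subr0 Hsup // in_setD1 ne He.
  + case: Hnz => e He; exists e; case: (eqVneq e e1) => [Ee|ne].
      by rewrite Ee d'e1 eqxx in He.
    by rewrite mulr0 subr0.
  + split.
    * under eq_bigr => e _ do rewrite mulrBr.
      rewrite sumrB -/a (bigD1 e1) //= eqxx mulr1 big1 ?addr0.
        by rewrite mulrC mulfVK ?subrr.
      by move=> e /negPf ->; rewrite !mulr0.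
    * move: (Allf_map Hk); apply: Allf_impl => g H0.
      under eq_bigr => e _ do rewrite mulrBr.
      rewrite sumrB [X in _ - X](bigD1 e1) //= eqxx mulr1 [X in _ - (_ + X)]big1 ?addr0; last first.
        by move=> e /negPf ->; rewrite !mulr0.
      move: H0; rewrite (eq_bigr (fun e => g e * d' e - g e1 / f e1 * (f e * d' e))); last first.
        by move=> e _; rewrite mulrBl mulrA.
      rewrite sumrB -mulr_sumr -/a => /eqP; rewrite subr_eq0 => /eqP ->.
      by rewrite mulrAC mulrA subrr.
- have Hsz' : (n < #|S|)%N by exact: ltn_trans (ltnSn n) Hsz.
  have [d [Hsup Hnz Hk]] := IH _ _ Hn Hsz'.
  exists d; split => //; split => //.
  apply: big1 => e _; case: (boolP (e \in S)) => He.
    by move: (Hnone e) => /= /negbT; rewrite He /= negbK => /eqP ->; rewrite mul0r.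
  by rewrite Hsup // mulr0.
Qed.
End Kernel.

Lemma finmin (R : realType) (E : finType) (f : E -> R) (e0 : E) (D : {set E}) (H : e0 \in D) :
  exists e, e \in D /\ forall e', e' \in D -> f e <= f e'.
Proof. by case: (@arg_minP _ R E e0 (mem D) f H) => e He Hmin; exists e. Qed.

Lemma Allf_mem (T : eqType) U (P : U -> Prop) (g : T -> U) s x :
  Allf P (map g s) -> x \in s -> P (g x).
Proof.
elim: s => //= y s IH [Hy Hs]; rewrite in_cons => /orP [/eqP ->|]; first by [].
exact: IH.
Qed.

Section Net.
Variables (R : realType) (E Q : finType) (src dst : E -> option Q).

Definition coef (q : Q) (e : E) : R := (dst e == Some q)%:R - (src e == Some q)%:R.

Definition fracs (y : E -> R) : {set E} := [set e | y e \isn't a Num.int].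

Lemma coef_int q e : coef q e \is a Num.int.
Proof. by rewrite /coef rpredB // rpred_nat. Qed.

Lemma coef_sq q e : coef q e != 0 -> coef q e * coef q e = 1.
Proof.
by rewrite /coef; case: (dst e == Some q); case: (src e == Some q);
  rewrite ?subrr ?eqxx //= ?subr0 ?mulr1 ?sub0r ?mulrNN ?mulr1.
Qed.

Lemma card_opt (o : option Q) : (#|[set q | o == Some q]| <= 1)%N.
Proof.
case: o => [q0|].
  have -> : [set q : Q | Some q0 == Some q] = [set q0].
    by apply/setP => q; rewrite !inE; apply/eqP/eqP => [[]|->].
  by rewrite cards1.
have -> : [set q : Q | None == Some q] = set0 by apply/setP => q; rewrite !inE.
by rewrite cards0.
Qed.

Lemma sum_opt (o : option Q) : \sum_q ((o == Some q)%:R : R) = (o != None)%:R.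
Proof.
case: o => [q0|]; last by rewrite big1.
rewrite (bigD1 q0) //= eqxx big1 ?addr0 // => q Hq.
by case: eqP => // [[]] Eq; rewrite Eq eqxx in Hq.
Qed.

Lemma coef_sum (y : E -> R) q : \sum_e coef q e * y e =
  \sum_(e | dst e == Some q) y e - \sum_(e | src e == Some q) y e.
Proof.
rewrite /coef; under eq_bigr => e _ do rewrite mulrBl.
rewrite sumrB !(big_mkcond (fun e => _ == _)) /=.
by congr (_ - _); apply: eq_bigr => e _; case: ifP; rewrite ?mul1r ?mul0r.
Qed.

Definition cnt e := #|[set q | coef q e != 0]|.

Lemma cnt_le2 e : (cnt e <= 2)%N.
Proof.
rewrite /cnt; apply: (@leq_trans #|[set q | dst e == Some q] :|: [set q | src e == Some q]|).
  apply: subset_leq_card; apply/subsetP => q; rewrite !inE /coef.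
  by case: (dst e == Some q); case: (src e == Some q); rewrite ?subrr ?eqxx.
rewrite cardsU; apply: leq_trans (leq_subr _ _) _.
by rewrite -addn1 leq_add // card_opt.
Qed.

Lemma cnt2_sum e : (2 <= cnt e)%N -> \sum_q coef q e = 0.
Proof.
move=> H2; rewrite /coef sumrB !sum_opt.
have Hone : forall q0, (forall q, coef q e != 0 -> q = q0) -> False.
  move=> q0 H; move: H2; rewrite /cnt.
  have : ([set q | coef q e != 0] \subset [set q0]).
    by apply/subsetP => q; rewrite !inE => /H ->.
  by move/subset_leq_card; rewrite cards1 => H1 H3; have := leq_trans H3 H1.
case Hd: (dst e) => [qd|]; case Hs: (src e) => [qs|] /=; first by rewrite subrr.
- exfalso; apply: (Hone qd) => q; rewrite /coef Hd Hs /= subr0 pnatr_eq0 eqb0 negbK.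
  by move/eqP => [].
- exfalso; apply: (Hone qs) => q; rewrite /coef Hd Hs /= sub0r oppr_eq0 pnatr_eq0 eqb0 negbK.
  by move/eqP => [].
- exfalso; move: H2; rewrite /cnt.
  have -> : [set q | coef q e != 0] = set0.
    by apply/setP => q; rewrite !inE /coef Hd Hs subrr eqxx.
  by rewrite cards0.
Qed.


Lemma sum_ge_all (A : {set E}) (f : E -> nat) :
  (forall e, f e <= 2)%N -> (2 * #|A| <= \sum_(e in A) f e)%N ->
  forall e, e \in A -> (2 <= f e)%N.
Proof.
move=> Hle Hs e He; rewrite leqNgt; apply/negP => Hlt.
move: Hs; rewrite (bigD1 e) //= (cardsD1 e A) He mulnDr muln1.
have : (\sum_(i in A | i != e) f i <= \sum_(i in A | i != e) 2)%N by apply: leq_sum.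
rewrite sum_nat_const.
have -> : #|[pred i in A | i != e]| = #|A :\ e|.
  by apply: eq_card => i; rewrite !inE andbC.
rewrite mulnC => H1 H2; lia.
Qed.

Lemma net_kernel (y : E -> R) :
  (forall q, \sum_e coef q e * y e = 0) -> fracs y != set0 ->
  exists d : E -> R, [/\ forall e, e \notin fracs y -> d e = 0,
    exists e, d e != 0 & forall q, \sum_e coef q e * d e = 0].
Proof.
move=> Hy HF.
set Fs := fracs y.
set Qt := [set q | [exists e in Fs, coef q e != 0]].
pose deg q := #|[set e in Fs | coef q e != 0]|.
have Hdeg : forall q, q \in Qt -> (2 <= deg q)%N.
  move=> q; rewrite inE => /existsP [e0 /andP [He0 Hc0]].
  rewrite leqNgt; apply/negP => Hlt.
  have Hd1 : [set e in Fs | coef q e != 0] = [set e0].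
    apply/eqP; rewrite eq_sym eqEcard sub1set inE He0 Hc0 cards1 /=.
    by rewrite -ltnS.
  have : coef q e0 * y e0 \is a Num.int.
    have := Hy q; rewrite (bigID (mem Fs)) /= (bigD1 e0) //= big1.
      rewrite addr0 => /eqP; rewrite addr_eq0 => /eqP ->.
      rewrite rpredN; apply: rpred_sum => e He; apply: rpredM; first exact: coef_int.
      by move: He; rewrite /Fs inE negbK.
    move=> e /andP [HeF He]; apply/eqP; rewrite mulf_eq0; apply/orP; left.
    apply/negPn/negP => Hc.
    have : e \in [set e in Fs | coef q e != 0] by rewrite inE HeF Hc.
    by rewrite Hd1 inE (negPf He).
  move=> Hint; have : y e0 \is a Num.int.
    by rewrite -[y e0]mul1r -(coef_sq Hc0) -mulrA rpredM // coef_int.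
  by move: He0; rewrite /Fs inE => /negP.
have Hcnt : forall e, e \in Fs -> forall q, coef q e != 0 -> q \in Qt.
  by move=> e He q Hq; rewrite inE; apply/existsP; exists e; rewrite He.
have Hdc : (\sum_(q in Qt) deg q = \sum_(e in Fs) cnt e)%N.
  rewrite /deg /cnt.
  under eq_bigr => q _ do rewrite -sum1_card.
  under [RHS]eq_bigr => e _ do rewrite -sum1_card.
  rewrite [RHS]big_mkcond /=.
  transitivity (\sum_q \sum_e (((e \in Fs) && (coef q e != 0%R)) : nat))%N.
    rewrite [RHS](bigID (mem Qt)) /= [X in _ = _ + X]big1 ?addn0.
      rewrite Monoid.simpm.
      apply: eq_bigr => q _; rewrite big_mkcond /=; apply: eq_bigr => e _.
      by rewrite inE; case: (_ && _).
    move=> q Hq; apply: big1 => e _; case: (boolP (e \in Fs)) => //= He.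
    by case: (boolP (coef q e != 0)) => // Hc; case/negP: Hq; apply: Hcnt Hc.
  rewrite exchange_big /=; apply: eq_bigr => e _.
  case: (boolP (e \in Fs)) => He /=; last by rewrite big1.
  by rewrite [RHS]big_mkcond; apply: eq_bigr => q _; rewrite inE; case: (_ != _).
have H2Q : (2 * #|Qt| <= \sum_(q in Qt) deg q)%N.
  by rewrite mulnC -sum_nat_const; apply: leq_sum => q Hq; exact: Hdeg.
have H2F : (\sum_(e in Fs) cnt e <= 2 * #|Fs|)%N.
  by rewrite mulnC -sum_nat_const; apply: leq_sum => e _; exact: cnt_le2.
have HFn : (0 < #|Fs|)%N by rewrite card_gt0.
have Hout : forall d : E -> R, (forall e, e \notin Fs -> d e = 0) ->
    forall q, q \notin Qt -> \sum_e coef q e * d e = 0.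
  move=> d Hsup q Hq; apply: big1 => e _.
  case: (boolP (e \in Fs)) => He; last by rewrite Hsup // mulr0.
  have /eqP -> : coef q e == 0; last by rewrite mul0r.
  by apply/negP => /negP Hc; case/negP: Hq; exact: Hcnt He _ Hc.
case: (ltnP #|Qt| #|Fs|) => Hlt.
  pose fs := [seq coef q | q <- enum Qt].
  have Hsz : (size fs < #|Fs|)%N by rewrite size_map -cardE.
  have [d [Hsup Hnz Hall]] := kernel_exists Hsz.
  exists d; split => // q; case: (boolP (q \in Qt)) => Hq; last exact: Hout.
  by apply: (Allf_mem (g := coef) Hall); rewrite mem_enum.
have Hc2 : forall e, e \in Fs -> (2 <= cnt e)%N.
  apply: sum_ge_all; first exact: cnt_le2.
  rewrite -Hdc; apply: leq_trans H2Q; by rewrite leq_mul2l.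
have /card_gt0P [q0 Hq0] : (0 < #|Qt|)%N by apply: leq_trans Hlt.
pose fs := [seq coef q | q <- enum (Qt :\ q0)].
have Hsz : (size fs < #|Fs|)%N.
  rewrite size_map -cardE (cardsD1 q0 Qt) Hq0 in H2Q *.
  rewrite add1n /= in H2Q; move: H2Q; rewrite Hdc => H2Q.
  have := leq_trans H2Q H2F; lia.
have [d [Hsup Hnz Hall]] := kernel_exists Hsz.
have Hin : forall q, q \in Qt :\ q0 -> \sum_e coef q e * d e = 0.
  by move=> q Hq; apply: (Allf_mem (g := coef) Hall); rewrite mem_enum.
exists d; split => // q; case: (boolP (q \in Qt)) => Hq; last exact: Hout.
case: (eqVneq q q0) => [->|ne]; last by apply: Hin; rewrite in_setD1 ne Hq.
have Htot : \sum_(q in Qt) \sum_e coef q e * d e = 0.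
  rewrite exchange_big /=; apply: big1 => e _.
  rewrite -mulr_suml.
  case: (boolP (e \in Fs)) => He; last by rewrite Hsup // mulr0.
  suff -> : \sum_(q in Qt) coef q e = \sum_q coef q e by rewrite (cnt2_sum (Hc2 e He)) mul0r.
  rewrite [in RHS](bigID (mem Qt)) /= [X in _ = _ + X]big1 ?addr0 // => q' Hq'.
  apply/eqP/negP => /negP Hc; case/negP: Hq'; exact: Hcnt He _ Hc.
move: Htot; rewrite (bigD1 q0) //= [X in _ + X = _]big1 ?addr0 // => q' /andP [Hq' ne].
by apply: Hin; rewrite in_setD1 ne Hq'.
Qed.

Lemma frac_bounds (x : R) : x \isn't a Num.int ->
  (Num.floor x)%:~R < x /\ x < (Num.ceil x)%:~R.
Proof.
move=> Hx; split; rewrite lt_neqAle ?floor_le ?ceil_ge andbT.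
  by apply/negP => /eqP H; case/negP: Hx; rewrite -H intr_int.
by apply/negP => /eqP H; case/negP: Hx; rewrite H intr_int.
Qed.

Lemma net_round (lo hi : E -> int) (c : E -> R) (y : E -> R) :
  (forall q, \sum_e coef q e * y e = 0) ->
  (forall e, (lo e)%:~R <= y e <= (hi e)%:~R) ->
  exists z : E -> int, [/\ forall q, \sum_e coef q e * (z e)%:~R = 0,
     forall e, (lo e <= z e <= hi e)%R &
     \sum_e c e * (z e)%:~R <= \sum_e c e * y e].
Proof.
move=> Hy Hb; move: (ltnSn #|fracs y|); move: {2}(#|fracs y|.+1) => N.
elim: N y Hy Hb => // N IH y Hy Hb HN.
case: (eqVneq (fracs y) set0) => HF.
  have Hz e : ((Num.floor (y e))%:~R : R) = y e.
    apply: floorK; have : e \notin fracs y by rewrite HF inE.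
    by rewrite inE negbK.
  exists (fun e => Num.floor (y e)); split.
  - by move=> q; under eq_bigr => e _ do rewrite Hz; exact: Hy.
  - by move=> e; rewrite -!(ler_int R) Hz; exact: Hb.
  - by under eq_bigr => e _ do rewrite Hz.
have [d [Hsup [e0 He0] Hk]] := net_kernel Hy HF.
pose s : R := if \sum_e c e * d e <= 0 then 1 else -1.
have s0 : s != 0 by rewrite /s; case: ifP => _; rewrite ?oppr_eq0 oner_eq0.
pose d' e := s * d e.
have Hk' q : \sum_e coef q e * d' e = 0.
  by rewrite /d'; under eq_bigr => e _ do rewrite mulrCA; rewrite -mulr_sumr Hk mulr0.
have Hcd : \sum_e c e * d' e <= 0.
  rewrite /d'; under eq_bigr => e _ do rewrite mulrCA; rewrite -mulr_sumr /s.
  case: ifP => H; first by rewrite mul1r.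
  by rewrite mulN1r oppr_le0 ltW // ltNge H.
pose D := [set e | d' e != 0].
have HD e : e \in D -> e \in fracs y.
  rewrite inE => H; apply/negPn/negP => Hn; move: H; by rewrite /d' (Hsup _ Hn) mulr0 eqxx.
have HDi e : e \in D -> y e \isn't a Num.int by move/HD; rewrite inE.
have He0D : e0 \in D by rewrite inE /d' mulf_neq0.
pose step e := if 0 < d' e then ((Num.ceil (y e))%:~R - y e) / d' e
               else ((Num.floor (y e))%:~R - y e) / d' e.
have [e1 [He1 Hmin]] := finmin step He0D.
pose t := step e1.
have Hstep e : e \in D -> 0 < step e.
  move=> HeD; have [Hf Hc] := frac_bounds (HDi _ HeD).
  move: HeD; rewrite inE => Hne; rewrite /step; case: ifP => Hp.
    by apply: divr_gt0 => //; rewrite subr_gt0.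
  have Hn : d' e < 0 by rewrite lt_neqAle Hne /= leNgt Hp.
  rewrite -mulrNN -invrN; apply: divr_gt0; rewrite ?oppr_gt0 //.
  by rewrite subr_lt0.
have Ht : 0 < t := Hstep _ He1.
pose y' e := y e + t * d' e.
have Hy' q : \sum_e coef q e * y' e = 0.
  rewrite /y'; under eq_bigr => e _ do rewrite mulrDr mulrCA.
  by rewrite big_split /= -mulr_sumr Hy Hk' mulr0 addr0.
have Hb' e : (lo e)%:~R <= y' e <= (hi e)%:~R.
  case: (boolP (e \in D)) => HeD; last first.
    by move: HeD; rewrite inE negbK /y' => /eqP ->; rewrite mulr0 addr0; exact: Hb.
  have Hte := Hmin e HeD; have := Hb e => /andP [Hl Hh].
  have [Hf Hc] := frac_bounds (HDi _ HeD).
  move: HeD; rewrite inE => Hne.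
  move: Hte; rewrite /y' /step /t; case: (ltP 0 (d' e)) => Hp Hte.
    apply/andP; split.
      by apply: (le_trans Hl); rewrite lerDl mulr_ge0 // ltW.
    have := ler_wpM2r (ltW Hp) Hte; rewrite divfK // => H1.
    apply: (le_trans (_ : _ <= y e + ((Num.ceil (y e))%:~R - y e))); first by rewrite lerD2l; exact: H1.
    by rewrite addrC subrK ler_int ceil_le_int.
  have Hn : d' e < 0 by rewrite lt_neqAle Hne Hp.
  apply/andP; split; last first.
    by apply: (le_trans _ Hh); rewrite gerDl pmulr_rle0 // ltW.
  have := ler_wnM2r (ltW Hn) Hte; rewrite divfK // => H1.
  apply: (le_trans (_ : _ <= y e + ((Num.floor (y e))%:~R - y e)) _); last by rewrite lerD2l; exact: H1.
  by rewrite addrC subrK ler_int floor_ge_int.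
have Hc' : \sum_e c e * y' e <= \sum_e c e * y e.
  rewrite /y'; under eq_bigr => e _ do rewrite mulrDr mulrCA.
  by rewrite big_split /= -mulr_sumr gerDl pmulr_rle0.
have HN' : (#|fracs y'| < N)%N.
  suff Hlt : (#|fracs y'| < #|fracs y|)%N by apply: leq_trans Hlt _; rewrite -ltnS.
  have HF1 : e1 \in fracs y := HD _ He1.
  apply: (@leq_trans #|fracs y :\ e1|.+1).
    rewrite ltnS.
    apply: subset_leq_card; apply/subsetP => e; rewrite in_setD1 !inE.
    case: (eqVneq e e1) => [->|ne] /=.
      move=> Hn; case/negP: Hn; rewrite /y' /t /step; have := He1; rewrite inE => Hne.
      by case: ifP => _; rewrite divfK // addrC subrK intr_int.
    apply: contraNN => Hint; case: (boolP (e \in D)) => HeD.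
      by move: (HDi _ HeD); rewrite Hint.
    by move: HeD; rewrite inE negbK /y' => /eqP ->; rewrite mulr0 addr0.
  by rewrite (cardsD1 e1 (fracs y)) HF1.
have [z [Hz1 Hz2 Hz3]] := IH y' Hy' Hb' HN'.
by exists z; split => //; apply: le_trans Hc'.
Qed.
End Net.
Section Trees.
Variable (m : nat).
Implicit Types (Tr : {set {set 'I_m}}) (K L I : {set 'I_m}).

Lemma pred_uniq Tr K L1 L2 : is_pred Tr K L1 -> is_pred Tr K L2 -> L1 = L2.
Proof.
move=> /and3P [H1 P1 /forall_inP F1] /and3P [H2 P2 /forall_inP F2].
apply/eqP; rewrite eqEsubset.
by rewrite (implyP (F1 _ H2) P2) (implyP (F2 _ H1) P1).
Qed.

Lemma succsP Tr I K : K \in succs Tr I -> [/\ K \in Tr, I \in Tr & K \proper I].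
Proof. by rewrite inE => /andP [HK /and3P [HI Hp _]]. Qed.

Lemma succs_triv Tr I : is_tree Tr -> trivIset (succs Tr I).
Proof.
move=> [_ Hlam]; apply/trivIsetP => A B HA HB neq.
have HA' := HA; have HB' := HB.
move: HA HB; rewrite !inE => /andP [TA /and3P [_ PA /forall_inP FA]] /andP [TB /and3P [_ PB /forall_inP FB]].
rewrite -setI_eq0; apply/negP => /negP Hint.
case/orP: (Hlam _ _ TA TB Hint) => Hsub.
- have HAB : A \proper B by rewrite properEneq neq Hsub.
  have := implyP (FA _ TB) HAB => HIB.
  by move: PB; rewrite properE HIB andbF.
- have HBA : B \proper A by rewrite properEneq eq_sym neq Hsub.
  have := implyP (FB _ TA) HBA => HIA.
  by move: PA; rewrite properE HIA andbF.
Qed.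

Lemma succs_cover Tr I : is_tree Tr ->
  (forall A j, A \in Tr -> j \in A -> [set j] \in Tr) ->
  I \in Tr -> #|I| != 1%N -> cover (succs Tr I) = I.
Proof.
move=> [_ Hlam] Hsing HI HI1; apply/setP => j; apply/bigcupP/idP.
  by case=> K /succsP [_ _ /proper_sub /subsetP]; apply.
move=> Hj.
pose C := [set L in Tr | (j \in L) && (L \proper I)].
have HjC : [set j] \in C.
  rewrite inE (Hsing _ _ HI Hj) set11 /= properEneq sub1set Hj andbT.
  by apply/eqP => E; move: HI1; rewrite -E cards1.
have [K HK Hmax] := @arg_maxnP _ [set j] (mem C) (fun L => #|L|) HjC.
have : K \in C := HK; rewrite inE => /andP [TK /andP [HjK PK]].
exists K => //; rewrite inE TK /= /is_pred HI PK /=.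
apply/forall_inP => L' TL'; apply/implyP => PKL'.
have Hint : L' :&: I != set0.
  apply/set0Pn; exists j; rewrite inE Hj andbT.
  by move/proper_sub/subsetP: PKL'; apply.
case/orP: (Hlam _ _ TL' HI Hint) => Hs //.
case: (eqVneq L' I) => [->|ne]; first by [].
have : L' \in C.
  rewrite inE TL' properEneq ne Hs andbT /=.
  by rewrite andbT; move/proper_sub/subsetP: PKL'; apply.
move=> HL; have Hle := Hmax _ HL.
by move: (proper_card PKL'); rewrite ltnNge; move: Hle => /= ->.
Qed.

Lemma succs_sum (V : nmodType) Tr I (f : 'I_m -> V) : is_tree Tr ->
  (forall A j, A \in Tr -> j \in A -> [set j] \in Tr) ->
  I \in Tr -> #|I| != 1%N ->
  \sum_(K in succs Tr I) \sum_(j in K) f j = \sum_(j in I) f j.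
Proof.
move=> Ht Hs HI HI1.
by rewrite -(big_trivIset _ (succs_triv _ Ht)) succs_cover.
Qed.

End Trees.

Section MCF.
Variables (R : realType) (n m : nat) (k : 'I_m -> 'I_n) (vv : 'I_m -> R)
  (T0 : {set {set 'I_m}}) (T : 'I_n -> {set {set 'I_m}})
  (l u : {set 'I_m} -> int).
Hypothesis hn : (2 <= n)%N.
Hypothesis hmsg : assignment_message k T0 T l u.

Let Rs := Rset k.

Lemma Rne i : Rs i != set0. Proof. by case: hmsg => H _ _ _ _; exact: H. Qed.
Lemma T0tree : is_tree T0. Proof. by case: hmsg => _ [H _] _ _ _. Qed.
Lemma Ttree i : is_tree (T i). Proof. by case: hmsg => _ [_ H] _ _ _. Qed.
Lemma Tsub i I : I \in T i -> I \subset Rs i.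
Proof. by case: hmsg => _ _ /(_ i) [H _ _] _ _; exact: H. Qed.
Lemma RT i : Rs i \in T i.
Proof. by case: hmsg => _ _ /(_ i) [_ H _] _ _. Qed.
Lemma T0J : [set: 'I_m] \in T0. Proof. by case: hmsg => _ _ _ [H _] _. Qed.
Lemma T0s j : [set j] \in T0. Proof. by case: hmsg => _ _ _ [_ H] _. Qed.
Lemma T0T i : T0 :&: T i = [set [set j] | j in Rs i].
Proof. by case: hmsg => _ _ _ _ [H _ _]. Qed.
Lemma TT i i' : i != i' -> T i :&: T i' = set0.
Proof. by case: hmsg => _ _ _ _ [_ H _]; exact: H. Qed.

Lemma T0Ti1 i K : K \in T0 -> K \in T i -> #|K| = 1%N.
Proof.
move=> H0 Hi; have : K \in T0 :&: T i by rewrite inE H0.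
by rewrite T0T => /imsetP [j _ ->]; rewrite cards1.
Qed.

Lemma TTeq i i' K : K \in T i -> K \in T i' -> i = i'.
Proof.
move=> H1 H2; apply/eqP/negPn/negP => /TT E.
have : K \in T i :&: T i' by rewrite inE H1.
by rewrite E inE.
Qed.

Lemma Tsing i A j : A \in T i -> j \in A -> [set j] \in T i.
Proof.
move=> HA Hj; case: hmsg => _ _ /(_ i) [_ _ H] _ _; apply: H.
by move/subsetP: (Tsub HA); apply.
Qed.

Lemma T0sing A j : A \in T0 -> j \in A -> [set j] \in T0.
Proof. by move=> _ _; exact: T0s. Qed.

Lemma Rinj : injective Rs.
Proof.
move=> i i' E; have /set0Pn [j Hj] := Rne i.
by move: (Hj); rewrite E !inE => /eqP <-; move: Hj; rewrite inE => /eqP.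
Qed.

Lemma RneT i : Rs i != [set: 'I_m].
Proof.
apply/negP => /eqP E.
have [i' ne] : exists i', i' != i.
  pose a := Ordinal (ltnW hn); pose b := Ordinal hn.
  case: (eqVneq a i) => [Ea|ne]; last by exists a.
  by exists b; rewrite -Ea; apply/eqP => /(congr1 val).
have /set0Pn [j Hj] := Rne i'.
have : j \in Rs i by rewrite E inE.
by rewrite !inE in Hj * => /eqP Ej; move: Hj; rewrite Ej => /eqP Eq; rewrite Eq eqxx in ne.
Qed.


Lemma IfamP I : reflect (I \in T0 \/ exists i, I \in T i) (I \in Ifam T0 T).
Proof.
rewrite /Ifam inE; apply: (iffP orP) => [[H|/bigcupP [i _ H]]|[H|[i H]]].
- by left.
- by right; exists i.
- by left.
- by right; apply/bigcupP; exists i.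
Qed.

Lemma feas_add (y : {set 'I_m} -> R) : mcf_feasible k T0 T l u y ->
  forall I, I \in Ifam T0 T -> y I = \sum_(j in I) y [set j].
Proof.
case=> H0 Hi _ _.
suff H : forall N (I : {set 'I_m}), (#|I| < N)%N -> I \in Ifam T0 T -> y I = \sum_(j in I) y [set j].
  by move=> I; apply: (H #|I|.+1).
elim=> // N IH I HN /IfamP HI.
case: (eqVneq #|I| 1%N) => [/eqP/cards1P [j ->]|HI1]; first by rewrite big_set1.
case: HI => [HI|[i HI]].
- have := H0 _ HI HI1; move/eqP; rewrite subr_eq0 => /eqP ->.
  rewrite -(succs_sum _ T0tree T0sing HI HI1); apply: eq_bigr => K HK.
  have [TK _ PK] := succsP HK.
  apply: IH; last by apply/IfamP; left.
  by apply: leq_trans (proper_card PK) _; rewrite -ltnS.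
- have := Hi _ _ HI HI1; move/eqP; rewrite subr_eq0 => /eqP <-.
  rewrite -(succs_sum _ (Ttree i) (@Tsing i) HI HI1); apply: eq_bigr => K HK.
  have [TK _ PK] := succsP HK.
  apply: IH; last by apply/IfamP; right; exists i.
  by apply: leq_trans (proper_card PK) _; rewrite -ltnS.
Qed.

Lemma sum_partk (V : nmodType) (f : 'I_m -> V) :
  \sum_i \sum_(j in Rs i) f j = \sum_j f j.
Proof.
rewrite [RHS](partition_big k predT) //=; apply: eq_bigr => i _.
by apply: eq_bigl => j; rewrite /Rs /Rset inE.
Qed.

Lemma build_eqs (f : 'I_m -> R) (y := fun I => \sum_(j in I) f j) :
  [/\ (forall I, I \in T0 -> #|I| != 1%N ->
         y I - \sum_(K in succs T0 I) y K = 0),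
      (forall i I, I \in T i -> #|I| != 1%N ->
         \sum_(K in succs (T i) I) y K - y I = 0) &
      \sum_(i < n) y (Rset k i) - y [set: 'I_m] = 0].
Proof.
split.
- by move=> I HI HI1; rewrite /y (succs_sum _ T0tree T0sing HI HI1) subrr.
- by move=> i I HI HI1; rewrite /y (succs_sum _ (Ttree i) (@Tsing i) HI HI1) subrr.
- rewrite /y (sum_partk f); under [X in _ - X]eq_bigl => j do rewrite inE.
  by rewrite subrr.
Qed.


Definition tr (o : option 'I_n) := if o is Some i then T i else T0.
Definition validb (o : option 'I_n) (I : {set 'I_m}) := (I \in tr o) && (#|I| != 1%N).
Definition predt (Tr : {set {set 'I_m}}) K := [pick L | is_pred Tr K L].
Definition treeof (K : {set 'I_m}) := [pick i | K \in T i].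

Definition dst (K : {set 'I_m}) : option (option (option 'I_n * {set 'I_m})) :=
  if (K \in T0) && (#|K| != 1%N) then Some (Some (None, K))
  else if treeof K is Some i then
    (if predt (T i) K is Some L then
       (if #|L| != 1%N then Some (Some (Some i, L)) else None)
     else if K == Rs i then Some None else None)
  else None.

Definition src (K : {set 'I_m}) : option (option (option 'I_n * {set 'I_m})) :=
  if K \in T0 then
    (if predt T0 K is Some L then
       (if #|L| != 1%N then Some (Some (None, L)) else None)
     else if K == [set: 'I_m] then Some None else None)
  else if treeof K is Some i then
    (if #|K| != 1%N then Some (Some (Some i, K)) else None)
  else None.

Definition dset (q : option (option 'I_n * {set 'I_m})) : {set {set 'I_m}} :=
  match q with
  | None => [set Rs i | i in 'I_n]
  | Some (None, X) => if validb None X then [set X] else set0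
  | Some (Some i, X) => if validb (Some i) X then succs (T i) X else set0
  end.

Definition sset (q : option (option 'I_n * {set 'I_m})) : {set {set 'I_m}} :=
  match q with
  | None => [set [set: 'I_m]]
  | Some (None, X) => if validb None X then succs T0 X else set0
  | Some (Some i, X) => if validb (Some i) X then [set X] else set0
  end.

Lemma predtP Tr K L : (predt Tr K == Some L) = is_pred Tr K L.
Proof.
rewrite /predt; case: pickP => [L' HL'|Hn].
  apply/eqP/idP => [[<-]//|HL]; congr Some; exact: pred_uniq HL' HL.
by rewrite Hn.
Qed.

Lemma predt_some Tr K L : predt Tr K = Some L -> is_pred Tr K L.
Proof. by move/eqP; rewrite predtP. Qed.

Lemma treeofP K i : K \in T i -> treeof K = Some i.
Proof.
move=> HK; rewrite /treeof; case: pickP => [i' Hi'|Hn]; last by rewrite Hn in HK.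
by rewrite (TTeq Hi' HK).
Qed.

Lemma treeof_some K i : treeof K = Some i -> K \in T i.
Proof. by rewrite /treeof; case: pickP => // i' Hi' [<-]. Qed.

Lemma predt_R i : predt (T i) (Rs i) = None.
Proof.
rewrite /predt; case: pickP => // L /and3P [HL HP _].
by move: (Tsub HL) HP; rewrite properE => ->; rewrite andbF.
Qed.

Lemma predt_J : predt T0 [set: 'I_m] = None.
Proof.
rewrite /predt; case: pickP => // L /and3P [HL HP _].
by move: HP; rewrite properE subsetT andbF.
Qed.

Lemma dstP K q : (dst K == Some q) = (K \in dset q).
Proof.
case: q => [[[i|] X]|] /=.
- apply/idP/idP.
    rewrite /dst; case: ifP => // H1.
    case Ht: (treeof K) => [i'|] //; case Hp: (predt (T i') K) => [L|].
      case: ifP => // HL /eqP [Ei EL]; subst i' L.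
      have HK := treeof_some Ht; have HP := predt_some Hp.
      have [HI _ _] : [/\ X \in T i, K \proper X & true].
        by move: HP => /and3P [].
      by rewrite /validb /= HI HL inE HK HP.
    by case: ifP.
  rewrite /validb /=; case: ifP => [/andP [HI HI1]|_]; last by rewrite inE.
  rewrite inE => /andP [HK HP].
  rewrite /dst; case: ifP => [/andP [H0 H1]|_].
    by rewrite (T0Ti1 H0 HK) in H1.
  rewrite (treeofP HK).
  have -> : predt (T i) K = Some X by apply/eqP; rewrite predtP.
  by rewrite HI1.
- rewrite /validb /=; apply/idP/idP.
    rewrite /dst; case: ifP => [H1 /eqP [<-]|_]; first by rewrite H1 inE.
    case: (treeof K) => [i'|] //; case: (predt (T i') K) => [L|].
      by case: ifP.
    by case: ifP.
  case: ifP => [HI|_]; last by rewrite inE.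
  by rewrite inE => /eqP ->; rewrite /dst HI.
- apply/idP/idP.
    rewrite /dst; case: ifP => // H1.
    case Ht: (treeof K) => [i'|] //; case Hp: (predt (T i') K) => [L|].
      by case: ifP.
    case: ifP => // /eqP -> _.
    by apply/imsetP; exists i'.
  case/imsetP => i _ ->.
  rewrite /dst; case: ifP => [/andP [H0 H1]|_].
    by rewrite (T0Ti1 H0 (RT i)) in H1.
  by rewrite (treeofP (RT i)) predt_R eqxx.
Qed.

Lemma srcP K q : (src K == Some q) = (K \in sset q).
Proof.
case: q => [[[i|] X]|] /=.
- rewrite /validb /=; apply/idP/idP.
    rewrite /src; case: ifP => H0.
      case: (predt T0 K) => [L|]; first by case: ifP.
      by case: ifP.
    case Ht: (treeof K) => [i'|] //; case: ifP => // H1 /eqP [Ei EK]; subst i' K.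
    by rewrite (treeof_some Ht) H1 inE.
  case: ifP => [/andP [HI HI1]|_]; last by rewrite inE.
  rewrite inE => /eqP ->; rewrite /src.
  case: ifP => [H0|_]; first by rewrite (T0Ti1 H0 HI) in HI1.
  by rewrite (treeofP HI) HI1.
- rewrite /validb /=; apply/idP/idP.
    rewrite /src; case: ifP => H0.
      case Hp: (predt T0 K) => [L|]; last by case: ifP.
      case: ifP => // HL /eqP [EL]; subst L.
      have HP := predt_some Hp.
      move: (HP) => /and3P [HI _ _].
      by rewrite HI HL inE H0 HP.
    by case: (treeof K) => [i'|] //; case: ifP.
  case: ifP => [/andP [HI HI1]|_]; last by rewrite inE.
  rewrite inE => /andP [HK HP].
  rewrite /src HK.
  have -> : predt T0 K = Some X by apply/eqP; rewrite predtP.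
  by rewrite HI1.
- apply/idP/idP.
    rewrite /src; case: ifP => H0.
      case: (predt T0 K) => [L|]; first by case: ifP.
      by case: ifP => // /eqP -> _; rewrite inE.
    by case: (treeof K) => [i'|] //; case: ifP.
  by rewrite inE => /eqP ->; rewrite /src T0J predt_J eqxx.
Qed.


Definition mcfexpr (y : {set 'I_m} -> R) (q : option (option 'I_n * {set 'I_m})) : R :=
  match q with
  | None => \sum_(i < n) y (Rs i) - y [set: 'I_m]
  | Some (None, X) => if validb None X then y X - \sum_(K in succs T0 X) y K else 0
  | Some (Some i, X) => if validb (Some i) X then \sum_(K in succs (T i) X) y K - y X else 0
  end.

Lemma net_mcf (y : {set 'I_m} -> R) q :
  \sum_K @coef R _ _ src dst q K * y K = mcfexpr y q.
Proof.
rewrite coef_sum.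
rewrite [Y in Y - _](eq_bigl (fun K => K \in dset q)); last by move=> K; rewrite dstP.
rewrite [Y in _ - Y](eq_bigl (fun K => K \in sset q)); last by move=> K; rewrite srcP.
case: q => [[[i|] X]|] /=.
- by case: ifP => _; rewrite ?big_set1 ?big_set0 ?subrr.
- by case: ifP => _; rewrite ?big_set1 ?big_set0 ?subrr.
- rewrite big_set1 big_imset //=; last by move=> i i' _ _; exact: Rinj.
Qed.

Lemma feas_net (y : {set 'I_m} -> R) : mcf_feasible k T0 T l u y ->
  forall q, \sum_K @coef R _ _ src dst q K * y K = 0.
Proof.
case=> H0 Hi Hr _ q; rewrite net_mcf.
case: q => [[[i|] X]|] //=; rewrite /validb /=; case: ifP => // /andP [].
- exact: Hi.
- exact: H0.
Qed.

Lemma net_feas (y : {set 'I_m} -> R) :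
  (forall q, \sum_K @coef R _ _ src dst q K * y K = 0) ->
  [/\ (forall I, I \in T0 -> #|I| != 1%N ->
         y I - \sum_(K in succs T0 I) y K = 0),
      (forall i I, I \in T i -> #|I| != 1%N ->
         \sum_(K in succs (T i) I) y K - y I = 0) &
      \sum_(i < n) y (Rset k i) - y [set: 'I_m] = 0].
Proof.
move=> H; split.
- move=> X HX HX1; have := H (Some (None, X)); rewrite net_mcf /= /validb /=.
  by rewrite HX HX1.
- move=> i X HX HX1; have := H (Some (Some i, X)); rewrite net_mcf /= /validb /=.
  by rewrite HX HX1.
- by have := H None; rewrite net_mcf.
Qed.


Lemma dst_Ifam K : dst K != None -> K \in Ifam T0 T.
Proof.
rewrite /dst; case: ifP => [/andP [H _] _|_]; first by apply/IfamP; left.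
case Ht: (treeof K) => [i|] // _; apply/IfamP; right; exists i; exact: treeof_some.
Qed.

Lemma src_Ifam K : src K != None -> K \in Ifam T0 T.
Proof.
rewrite /src; case: ifP => [H _|_]; first by apply/IfamP; left.
case Ht: (treeof K) => [i|] // _; apply/IfamP; right; exists i; exact: treeof_some.
Qed.

Lemma coef_Ifam q K : @coef R _ _ src dst q K != 0 -> K \in Ifam T0 T.
Proof.
rewrite /coef; case Hd: (dst K == Some q); case Hs: (src K == Some q);
  rewrite ?subrr ?eqxx //= => _.
- by apply: dst_Ifam; rewrite (eqP Hd).
- by apply: src_Ifam; rewrite (eqP Hs).
Qed.

Definition cst (p : 'I_n -> R) (K : {set 'I_m}) : R :=
  \sum_j (K == [set j])%:R * (p (k j) - vv j).

Lemma obj_cost p (y : {set 'I_m} -> R) :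
  mcf_obj k vv p y = \sum_K cst p K * y K.
Proof.
rewrite /mcf_obj.
transitivity (\sum_i \sum_(j in Rs i) (p (k j) - vv j) * y [set j]).
  apply: eq_bigr => i _; apply: eq_bigr => j.
  by rewrite /Rs /Rset inE => /eqP ->.
rewrite sum_partk /cst.
under [RHS]eq_bigr => K _ do rewrite mulr_suml.
rewrite exchange_big /=; apply: eq_bigr => j _.
rewrite (bigD1 [set j]) //= eqxx mul1r big1 ?addr0 // => K /negPf ->.
by rewrite mul0r mul0r.
Qed.

Lemma mcf_round p (y : {set 'I_m} -> R) : mcf_feasible k T0 T l u y ->
  exists z : {set 'I_m} -> int,
    mcf_feasible k T0 T l u (fun K => (z K)%:~R : R) /\
    mcf_obj k vv p (fun K => (z K)%:~R : R) <= mcf_obj k vv p y.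
Proof.
move=> Hf; have Hnet := feas_net Hf.
pose y0 K := if K \in Ifam T0 T then y K else 0.
pose lo K := if K \in Ifam T0 T then l K else 0.
pose hi K := if K \in Ifam T0 T then u K else 0.
have Hnet0 q : \sum_K @coef R _ _ src dst q K * y0 K = 0.
  rewrite -[RHS](Hnet q); apply: eq_bigr => K _; rewrite /y0; case: ifP => // HK.
  case: (eqVneq (@coef R _ _ src dst q K) 0) => [->|Hc]; first by rewrite !mul0r.
  by rewrite (coef_Ifam Hc) in HK.
have Hb0 K : (lo K)%:~R <= y0 K <= (hi K)%:~R.
  rewrite /lo /hi /y0; case: ifP => HK; last by rewrite lexx.
  by case: Hf => _ _ _ /(_ K HK) [-> ->].
have [z [Hz1 Hz2 Hz3]] := @net_round R _ _ src dst lo hi (cst p) y0 Hnet0 Hb0.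
exists z; split.
  have [E1 E2 E3] := net_feas Hz1; split => // K HK.
  by have := Hz2 K; rewrite /lo /hi HK => /andP [H1 H2]; rewrite !ler_int H1 H2.
rewrite !obj_cost; apply: le_trans Hz3 _; rewrite le_eqVlt; apply/orP; left.
apply/eqP; apply: eq_bigr => K _; rewrite /y0; case: ifP => // HK.
case: (eqVneq (cst p K) 0) => [->|Hc]; first by rewrite !mul0r.
exfalso; move: Hc HK; rewrite /cst.
case: (pickP (fun j => K == [set j])) => [j /eqP ->|Hn].
  by rewrite (_ : [set j] \in Ifam T0 T) //; apply/IfamP; left; exact: T0s.
by rewrite big1 ?eqxx // => j _; rewrite Hn mul0r.
Qed.


Lemma build_feas (x : 'I_m -> int) :
  (forall I, I \in Ifam T0 T ->
     (l I <= \sum_(j in I) x j)%R /\ (\sum_(j in I) x j <= u I)%R) ->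
  mcf_feasible k T0 T l u (fun I => \sum_(j in I) (x j)%:~R : R).
Proof.
move=> Hb; have [E1 E2 E3] := build_eqs (fun j => (x j)%:~R); split => //.
by move=> I HI; have [H1 H2] := Hb I HI; rewrite -rmorph_sum !ler_int.
Qed.

Lemma obj_x p (y : {set 'I_m} -> R) (x : 'I_m -> int) :
  (forall j, y [set j] = (x j)%:~R) ->
  mcf_obj k vv p y = pairing p (fun i => \sum_(j in Rs i) x j) - x_value vv x.
Proof.
move=> Hy; rewrite /mcf_obj /pairing /x_value.
under eq_bigr => i _ do (under eq_bigr => j _ do rewrite Hy mulrBl; rewrite sumrB).
rewrite sumrB; congr (_ - _).
  by apply: eq_bigr => i _; rewrite rmorph_sum mulr_sumr.
by rewrite (sum_partk (fun j => vv j * (x j)%:~R)).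
Qed.

Definition xfeasb (q : 'I_n -> int) (x : 'I_m -> int) : bool :=
  [forall I in Ifam T0 T, (l I <= \sum_(j in I) x j)%R && (\sum_(j in I) x j <= u I)%R]
  && [forall i, \sum_(j in Rs i) x j == q i].

Lemma xfeasbP q x : reflect (x_feasible k T0 T l u q x) (xfeasb q x).
Proof.
apply: (iffP andP) => [[/forall_inP H1 /forallP H2]|[H1 H2]].
  split; first by move=> I /H1 /andP [].
  by move=> i; apply/eqP; exact: H2.
split; first by apply/forall_inP => I /H1 [-> ->].
by apply/forallP => i; rewrite H2.
Qed.

Lemma finmax (F : finType) (P : pred F) (f : F -> R) t0 : P t0 ->
  exists t, P t /\ forall t', P t' -> f t' <= f t.
Proof. by move=> H; case: (@arg_maxP _ R F t0 P f H) => t Ht Hm; exists t. Qed.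

Lemma val_exists q : in_Q k T0 T l u q -> exists w, is_val k vv T0 T l u q w.
Proof.
case=> x0 Hx0.
pose B : nat := (\sum_j (absz (l [set j]) + absz (u [set j])))%N.
have Hbd x : x_feasible k T0 T l u q x -> forall j,
    (absz (x j + B%:Z)%R < B.*2.+1)%N /\ (0 <= x j + B%:Z)%R.
  case=> H1 _ j.
  have HJ : [set j] \in Ifam T0 T by apply/IfamP; left; exact: T0s.
  have [Hl Hu] := H1 _ HJ; rewrite big_set1 in Hl Hu.
  have HB : (absz (l [set j]) + absz (u [set j]) <= B)%N.
    by rewrite /B (bigD1 j) //= leq_addr.
  split; lia.
pose FT := {ffun 'I_m -> 'I_(B.*2.+1)}.
pose emb (t : FT) (j : 'I_m) : int := ((t j : nat)%:Z - B%:Z)%R.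
pose enc (x : 'I_m -> int) : FT := [ffun j => inord (absz (x j + B%:Z)%R)].
have Hee x : x_feasible k T0 T l u q x -> emb (enc x) = x.
  move=> Hx; apply: functional_extensionality => j; rewrite /emb /enc ffunE.
  have [H1 H2] := Hbd x Hx j.
  by rewrite inordK // gez0_abs // addrK.
have Hp0 : xfeasb q (emb (enc x0)) by apply/xfeasbP; rewrite Hee.
have [t [Ht Hmax]] := @finmax _ (fun t => xfeasb q (emb t)) (fun t => x_value vv (emb t)) _ Hp0.
exists (x_value vv (emb t)); split; first by exists (emb t); split => //; exact/xfeasbP.
move=> x Hx; rewrite -(Hee x Hx); apply: Hmax; apply/xfeasbP; by rewrite Hee.
Qed.


Lemma obj_build p (q : 'I_n -> int) (x : 'I_m -> int) :
  x_feasible k T0 T l u q x ->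
  mcf_obj k vv p (fun I => \sum_(j in I) (x j)%:~R : R) = pairing p q - x_value vv x.
Proof.
case=> _ H2; rewrite (@obj_x p _ x); last by move=> j; rewrite big_set1.
congr (_ - _); apply: eq_bigr => i _; by rewrite H2.
Qed.

Lemma main_sec p q : demand k vv T0 T l u p q <->
  exists y : {set 'I_m} -> R,
    [/\ mcf_optimal k vv T0 T l u p y,
        integral_sol T0 T y &
        forall i, y (Rset k i) = (q i)%:~R].
Proof.
split.
- case=> HQ [w [[[x [Hx Hxw]] Hmax] Hdem]].
  pose y := fun I : {set 'I_m} => \sum_(j in I) (x j)%:~R : R.
  have Hyf : mcf_feasible k T0 T l u y by apply: build_feas; case: Hx.
  have Ho : mcf_obj k vv p y = pairing p q - w by rewrite (obj_build p Hx) Hxw.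
  exists y; split.
  + split => // y' Hy'.
    have [z [Hzf Hzo]] := mcf_round p Hy'.
    pose x'' j := z [set j].
    have Hz_add I : I \in Ifam T0 T -> ((z I)%:~R : R) = (\sum_(j in I) x'' j)%:~R.
      by move=> HI; rewrite (feas_add Hzf HI) rmorph_sum.
    have Hx'' : x_feasible k T0 T l u (fun i => \sum_(j in Rs i) x'' j) x''.
      split => // I HI; case: Hzf => _ _ _ /(_ I HI) [Hl Hu].
      by rewrite Hz_add // !ler_int in Hl Hu.
    have HQ'' : in_Q k T0 T l u (fun i => \sum_(j in Rs i) x'' j) by exists x''.
    have [w'' Hw''] := val_exists HQ''.
    have H1 := Hdem _ _ HQ'' Hw''.
    have H2 : x_value vv x'' <= w'' by case: Hw'' => _; apply.
    have Ho'' : mcf_obj k vv p (fun K => (z K)%:~R : R) =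
        pairing p (fun i => \sum_(j in Rs i) x'' j) - x_value vv x''.
      exact: obj_x.
    rewrite Ho; apply: le_trans _ Hzo; rewrite Ho''; lra.
  + by move=> I HI; exists (\sum_(j in I) x j); rewrite rmorph_sum.
  + by move=> i; rewrite /y -rmorph_sum; case: Hx => _ ->.
- case=> y [[Hf Hopt] Hint Hq].
  pose x j := Num.floor (y [set j]).
  have Hys j : y [set j] = (x j)%:~R.
    have [|z Hz] := Hint [set j]; first by apply/IfamP; left; exact: T0s.
    by rewrite /x Hz intrKfloor.
  have Hadd I : I \in Ifam T0 T -> y I = (\sum_(j in I) x j)%:~R.
    by move=> HI; rewrite (feas_add Hf HI) rmorph_sum; apply: eq_bigr => j _; exact: Hys.
  have Hx : x_feasible k T0 T l u q x.
    split.
      move=> I HI; case: Hf => _ _ _ /(_ I HI) [Hl Hu].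
      by rewrite Hadd // !ler_int in Hl Hu.
    move=> i; apply: (@intr_inj R); rewrite -Hq -Hadd //.
    by apply/IfamP; right; exists i; exact: RT.
  have Ho : mcf_obj k vv p y = pairing p q - x_value vv x.
    rewrite (obj_x p Hys); congr (_ - _); apply: eq_bigr => i _.
    by case: Hx => _ ->.
  split; first by exists x.
  exists (x_value vv x); split.
    split; first by exists x.
    move=> x' Hx'; have := Hopt _ (build_feas (proj1 Hx')).
    rewrite Ho (obj_build p Hx'); lra.
  move=> q' w' _ [[x' [Hx' Hw']] _].
  have := Hopt _ (build_feas (proj1 Hx')); rewrite Ho (obj_build p Hx') Hw'; lra.
Qed.

End MCF.

Theorem mainTheorem3 (R : realType) (n m : nat) (hn : (2 <= n)%N)
  (k : 'I_m -> 'I_n) (vv : 'I_m -> R)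
  (T0 : {set {set 'I_m}}) (T : 'I_n -> {set {set 'I_m}})
  (l u : {set 'I_m} -> int)
  (hmsg : assignment_message k T0 T l u)
  (p : 'I_n -> R) (q : 'I_n -> int) :
  demand k vv T0 T l u p q <->
  exists y : {set 'I_m} -> R,
    [/\ mcf_optimal k vv T0 T l u p y,
        integral_sol T0 T y &
        forall i, y (Rset k i) = (q i)%:~R].
Proof. exact: (main_sec vv hn hmsg p q). Qed.
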